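(* Let $X$, $A$, $B$, $C$, $Y$, $H$, $V$, $G_+$, $G_-$ be as in the context. Then $G_+$ and $G_-$ are closed and quasi-accretive. In particular, for $G\in\{G_+,G_-\}$ and all $\xi\in D(H)$, $\mathrm{Re}(\xi|G\xi)\geqslant-(\mu_B+|V|)(\xi|\xi)$, where one may take $\mu_B:=0$ if $B$ is symmetric and $\mu_B:=\|B\|$ if $B$ is bounded.
   Context: $(X,\langle\cdot|\cdot\rangle)$ is a nontrivial complex Hilbert space with norm $\|\cdot\|$. $A:D(A)\to X$ is a densely defined self-adjoint linear operator with $\langle\xi|A\xi\rangle\geqslant\varepsilon\langle\xi|\xi\rangle$ for all $\xi\in D(A)$ for some $\varepsilon>0$; $A^{1/2}$ is its positive self-adjoint square root. $B:D(A^{1/2})\to X$ is linear with $\|B\xi\|^2\leqslant a^2\|A^{1/2}\xi\|^2+b^2\|\xi\|^2$ for all $\xi\in D(A^{1/2})$, for some $a\in[0,1)$, $b\in\mathbb{R}$, and $B$ is symmetric or bounded. $C:D(A^{1/2})\to X$ is linear with $\|C\xi\|^2\leqslant c^2\|A^{1/2}\xi\|^2+d^2\|\xi\|^2$ for all $\xi\in D(A^{1/2})$, for some real $c,d$. $Y:=D(A^{1/2})\times X$ with inner product $(\xi|\eta):=\langle A^{1/2}\xi_1|A^{1/2}\eta_1\rangle+\langle\xi_2|\eta_2\rangle$; $|V|$ is the operator norm of $V$ on $Y$. $H:D(A)\times D(A^{1/2})\to Y$, $H\xi:=(-i\xi_2,iA\xi_1)$; $\hat B:D(H)\to Y$, $\hat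 B\xi:=(0,-B\xi_2)$; $V:Y\to Y$, $V\xi:=(0,iC\xi_1)$ (a bounded operator); $G_+:=-i(H+\hat B+V)$, $G_-:=i(H+\hat B+V)$ with domain $D(H)$. An operator $G$ is quasi-accretive if there is $\omega\in\mathbb{R}$ with $\mathrm{Re}(\xi|G\xi)\geqslant-\omega(\xi|\xi)$ for all $\xi\in D(G)$. *)

(* Defs.v *)
From HB Require Import structures.
From mathcomp Require Import all_boot all_order all_algebra.
From mathcomp Require Import complex.
From mathcomp Require Import boolp classical_sets reals.

Set Implicit Arguments.
Unset Strict Implicit.
Unset Printing Implicit Defensive.
Import Order.TTheory GRing.Theory Num.Theory.
Local Open Scope ring_scope.
Local Open Scope classical_set_scope.

Section Hilbert.
Variable R : realType.
Local Notation C := (R[i]).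

Definition iC : C := Complex 0 1.

(* Abstract complex pre-Hilbert space: a vector space V over C with a
   sesquilinear form, antilinear in the first, linear in the second argument
   (physics convention <xi|A xi>). *)
Definition is_inner_product (V : lmodType C) (ip : V -> V -> C) : Prop :=
  [/\ forall (a : C) (x y z : V), ip x (a *: y + z) = a * ip x y + ip x z,
      forall x y : V, ip y x = conjc (ip x y),
      forall x : V, 0 <= ip x x
    & forall x : V, ip x x = 0 -> x = 0].

Definition ipnorm (V : lmodType C) (ip : V -> V -> C) (x : V) : R :=
  Num.sqrt (complex.Re (ip x x)).

Definition ip_cvg (V : lmodType C) (ip : V -> V -> C) (u : nat -> V) (x : V)
  : Prop :=
  forall e : R, 0 < e -> exists N : nat, forall n, (N <= n)%N ->
    ipnorm ip (u n - x) < e.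

Definition ip_cauchy (V : lmodType C) (ip : V -> V -> C) (u : nat -> V)
  : Prop :=
  forall e : R, 0 < e -> exists N : nat, forall n m, (N <= n)%N -> (N <= m)%N ->
    ipnorm ip (u n - u m) < e.

Definition ip_complete (V : lmodType C) (ip : V -> V -> C) : Prop :=
  forall u : nat -> V, ip_cauchy ip u -> exists x, ip_cvg ip u x.

(* Partially defined operators are pairs (domain D, map T); only the values
   of T on D matter. *)
Definition lin_on (V W : lmodType C) (D : V -> Prop) (T : V -> W) : Prop :=
  [/\ D 0,
      forall (a : C) x y, D x -> D y -> D (a *: x + y)
    & forall (a : C) x y, D x -> D y -> T (a *: x + y) = a *: T x + T y].

Definition dense_in (V : lmodType C) (ip : V -> V -> C) (D : V -> Prop)
  : Prop :=
  forall (x : V) (e : R), 0 < e -> exists y, D y /\ ipnorm ip (x - y) < e.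

Definition symmetric_on (V : lmodType C) (ip : V -> V -> C)
  (D : V -> Prop) (T : V -> V) : Prop :=
  forall x y, D x -> D y -> ip (T x) y = ip x (T y).

Definition adj_dom (V : lmodType C) (ip : V -> V -> C)
  (D : V -> Prop) (T : V -> V) (y : V) : Prop :=
  exists z : V, forall x, D x -> ip (T x) y = ip x z.

(* densely defined self-adjoint linear operator: T symmetric and
   D(T^* ) included in D(T) (so that T^* = T) *)
Definition self_adjoint (V : lmodType C) (ip : V -> V -> C)
  (D : V -> Prop) (T : V -> V) : Prop :=
  [/\ lin_on D T, dense_in ip D, symmetric_on ip D T
    & forall y, adj_dom ip D T y -> D y].

Definition is_pos_sqrt (V : lmodType C) (ip : V -> V -> C)
  (DA : V -> Prop) (A : V -> V) (DS : V -> Prop) (S : V -> V) : Prop :=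
  [/\ self_adjoint ip DS S,
      forall x, DS x -> 0 <= ip x (S x),
      forall x, DA x <-> (DS x /\ DS (S x))
    & forall x, DA x -> A x = S (S x)].

Definition bounded_on (V W : lmodType C) (ipV : V -> V -> C)
  (ipW : W -> W -> C) (D : V -> Prop) (T : V -> W) : Prop :=
  exists M : R, forall x, D x -> ipnorm ipW (T x) <= M * ipnorm ipV x.

Definition opnorm (V W : lmodType C) (ipV : V -> V -> C)
  (ipW : W -> W -> C) (D : V -> Prop) (T : V -> W) : R :=
  sup [set ipnorm ipW (T x) | x in [set x | D x /\ ipnorm ipV x <= 1]].

Definition closed_op (V : lmodType C) (ip : V -> V -> C)
  (inY : V -> Prop) (D : V -> Prop) (G : V -> V) : Prop :=
  forall (u : nat -> V) (x y : V),
    (forall n, D (u n)) -> inY x -> inY y ->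
    ip_cvg ip u x -> ip_cvg ip (fun n => G (u n)) y ->
    D x /\ G x = y.

Definition quasi_accretive (V : lmodType C) (ip : V -> V -> C)
  (D : V -> Prop) (G : V -> V) : Prop :=
  exists w : R, forall x, D x -> complex.Re (ip x (G x)) >= - w * complex.Re (ip x x).

Section Energy.
Variable X : lmodType C.
Variable ip : X -> X -> C.
Variables (DA : X -> Prop) (A : X -> X) (DS : X -> Prop) (S : X -> X).
Variables (B Cop : X -> X).

(* carrier X * X; Y is the subset with first component in D(A^{1/2}) *)
Definition inY (xi : X * X) : Prop := DS xi.1.
Definition Yip (xi eta : X * X) : C := ip (S xi.1) (S eta.1) + ip xi.2 eta.2.

Definition DH (xi : X * X) : Prop := DA xi.1 /\ DS xi.2.
Definition Hop (xi : X * X) : X * X := (- (iC *: xi.2), iC *: A xi.1).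
Definition Bhat (xi : X * X) : X * X := (0, - B xi.2).
Definition Vop (xi : X * X) : X * X := (0, iC *: Cop xi.1).
Definition Gplus (xi : X * X) : X * X :=
  (- iC) *: (Hop xi + Bhat xi + Vop xi).
Definition Gminus (xi : X * X) : X * X :=
  iC *: (Hop xi + Bhat xi + Vop xi).
End Energy.

End Hilbert.

(* Main.v *)
Require Import Defs.
From HB Require Import structures.
From mathcomp Require Import all_boot all_order all_algebra.
From mathcomp Require Import complex.
From mathcomp Require Import boolp classical_sets reals.
From mathcomp Require Import ring lra.
Set Implicit Arguments.
Unset Strict Implicit.
Unset Printing Implicit Defensive.
Import Order.TTheory GRing.Theory Num.Theory.
Local Open Scope ring_scope.
Local Open Scope complex_scope.

Section IP.
Variable R : realType.
Variable X : lmodType R[i].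
Variable ip : X -> X -> R[i].
Hypothesis Hip : is_inner_product ip.

Lemma ipDr x y z : ip x (y + z) = ip x y + ip x z.
Proof. case: Hip => h _ _ _; by rewrite -[y in LHS]scale1r h mul1r. Qed.
Lemma ip0r x : ip x 0 = 0.
Proof. apply: (addrI (ip x 0)); by rewrite addr0 -ipDr addr0. Qed.
Lemma ipZr a x y : ip x (a *: y) = a * ip x y.
Proof. case: Hip => h _ _ _; by rewrite -[_ *: y]addr0 h ip0r addr0. Qed.
Lemma ipNr x y : ip x (- y) = - ip x y.
Proof. by rewrite -scaleN1r ipZr mulN1r. Qed.
Lemma ipBr x y z : ip x (y - z) = ip x y - ip x z.
Proof. by rewrite ipDr ipNr. Qed.
Lemma ipC x y : ip y x = conjc (ip x y).
Proof. by case: Hip. Qed.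
Lemma conjD (z w : R[i]) : conjc (z + w) = conjc z + conjc w.
Proof. by case: z => ? ?; case: w => ? ? /=; rewrite opprD. Qed.
Lemma conjM (z w : R[i]) : conjc (z * w) = conjc z * conjc w.
Proof. case: z => ? ?; case: w => ? ? /=; congr Complex; lra. Qed.
Lemma conjN (z : R[i]) : conjc (- z) = - conjc z.
Proof. by case: z => ? ?. Qed.
Lemma conj0 : conjc (0 : R[i]) = 0.
Proof. by rewrite /= oppr0. Qed.
Lemma ipDl x y z : ip (y + z) x = ip y x + ip z x.
Proof. by rewrite !(ipC x) ipDr conjD. Qed.
Lemma ipZl a x y : ip (a *: y) x = conjc a * ip y x.
Proof. by rewrite !(ipC x) ipZr conjM. Qed.
Lemma ipNl x y : ip (- y) x = - ip y x.
Proof. by rewrite !(ipC x) ipNr conjN. Qed.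
Lemma ipBl x y z : ip (y - z) x = ip y x - ip z x.
Proof. by rewrite ipDl ipNl. Qed.
Lemma ip0l x : ip 0 x = 0.
Proof. by rewrite ipC ip0r conj0. Qed.

Definition Nf x := complex.Re (ip x x).
Lemma ip_self x : ip x x = (Nf x)%:C.
Proof.
case: Hip => _ _ h _; have := ger0_Im (h x); rewrite /Nf.
by case: (ip x x) => a b /= ->.
Qed.
Lemma Nf_ge0 x : 0 <= Nf x.
Proof. by case: Hip => _ _ h _; have := h x; rewrite ip_self ler0c. Qed.
Lemma Nf_eq0 x : Nf x = 0 -> x = 0.
Proof. by case: Hip => _ _ _ h e; apply: h; rewrite ip_self e. Qed.
Lemma ReC (z : R[i]) : complex.Re (conjc z) = complex.Re z.
Proof. by case: z. Qed.
Lemma ImC (z : R[i]) : complex.Im (conjc z) = - complex.Im z.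
Proof. by case: z. Qed.
Lemma ReipC x y : complex.Re (ip y x) = complex.Re (ip x y).
Proof. by rewrite ipC ReC. Qed.
Lemma ReD (z w : R[i]) : complex.Re (z + w) = complex.Re z + complex.Re w.
Proof. by case: z; case: w. Qed.
Lemma ImD (z w : R[i]) : complex.Im (z + w) = complex.Im z + complex.Im w.
Proof. by case: z; case: w. Qed.
Lemma ReN (z : R[i]) : complex.Re (- z) = - complex.Re z.
Proof. by case: z. Qed.
Lemma ImN (z : R[i]) : complex.Im (- z) = - complex.Im z.
Proof. by case: z. Qed.
Lemma ReM (z w : R[i]) : complex.Re (z * w) = complex.Re z * complex.Re w - complex.Im z * complex.Im w.
Proof. by case: z; case: w. Qed.
Lemma ImM (z w : R[i]) : complex.Im (z * w) = complex.Re z * complex.Im w + complex.Im z * complex.Re w.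
Proof. by case: z => ? ?; case: w => ? ? /=. Qed.

Lemma NfD x y : Nf (x + y) = Nf x + Nf y + 2 * complex.Re (ip x y).
Proof.
rewrite /Nf ipDl !ipDr !ReD (ReipC x y); lra.
Qed.
Lemma NfZ a x : Nf (a *: x) = (complex.Re a ^+ 2 + complex.Im a ^+ 2) * Nf x.
Proof.
rewrite /Nf ipZl ipZr ip_self; case: a => a1 a2 /=; lra.
Qed.

Lemma disc (p q r : R) : 0 <= p -> (forall t, 0 <= t ^+ 2 * p + 2 * t * r + q) -> r ^+ 2 <= p * q.
Proof.
move=> hp h.
have hq : 0 <= q by have := h 0; lra.
have [p0|pp] := eqVneq p 0.
  subst p.
  have [r0|rn] := eqVneq r 0; first by subst r; lra.
  have := h (- (q + 1) / (2 * r)).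
  have -> : 2 * (- (q + 1) / (2 * r)) * r = - (q + 1).
    by field.
  lra.
have pgt : 0 < p by rewrite lt_def pp hp.
have := h (- r / p).
have -> : (- r / p) ^+ 2 * p + 2 * (- r / p) * r + q = q - r ^+ 2 / p by field.
move=> H.
have : r ^+ 2 / p <= q by lra.
by rewrite ler_pdivrMr // mulrC.
Qed.

Lemma CS x y : complex.Re (ip x y) ^+ 2 <= Nf x * Nf y.
Proof.
apply: disc; first exact: Nf_ge0.
move=> t; have := Nf_ge0 (t%:C *: x + y).
rewrite NfD NfZ ipZl /= ReM /= expr0n /= addr0 oppr0 mul0r subr0.
lra.
Qed.

Definition nrm x := Num.sqrt (Nf x).
Lemma nrm_ge0 x : 0 <= nrm x. Proof. exact: sqrtr_ge0. Qed.
Lemma nrm_sq x : nrm x ^+ 2 = Nf x. Proof. by rewrite sqr_sqrtr // Nf_ge0. Qed.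
Lemma nrm_ipnorm x : ipnorm ip x = nrm x. Proof. by []. Qed.

Lemma sq_le (u v : R) : 0 <= v -> u ^+ 2 <= v ^+ 2 -> u <= v.
Proof. move=> hv h; nra. Qed.
Lemma sq_lt (u v : R) : 0 <= v -> u ^+ 2 < v ^+ 2 -> u < v.
Proof. move=> hv h; nra. Qed.

Lemma CSabs x y : `|complex.Re (ip x y)| <= nrm x * nrm y.
Proof.
apply: sq_le; first by rewrite mulr_ge0 // nrm_ge0.
by rewrite real_normK ?num_real // exprMn !nrm_sq CS.
Qed.

Lemma ImRe (z : R[i]) : complex.Im z = complex.Re (conjc 'i * z).
Proof. case: z => a b /=; lra. Qed.

Lemma Nf_i x : Nf ('i *: x) = Nf x.
Proof. by rewrite NfZ /=; lra. Qed.
Lemma nrm_i x : nrm ('i *: x) = nrm x.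
Proof. by rewrite /nrm Nf_i. Qed.

Lemma CSIm x y : `|complex.Im (ip x y)| <= nrm x * nrm y.
Proof. by rewrite ImRe -ipZl -(nrm_i x) CSabs. Qed.

Lemma nrm_triangle x y : nrm (x + y) <= nrm x + nrm y.
Proof.
apply: sq_le; first by rewrite addr_ge0 // nrm_ge0.
rewrite nrm_sq NfD sqrrD !nrm_sq.
have := CSabs x y; have := ler_norm (complex.Re (ip x y)); lra.
Qed.

Lemma NfN x : Nf (- x) = Nf x.
Proof. by rewrite /Nf ipNl ipNr opprK. Qed.
Lemma nrmN x : nrm (- x) = nrm x.
Proof. by rewrite /nrm NfN. Qed.
Lemma nrmB x y : nrm (x - y) = nrm (y - x).
Proof. by rewrite -nrmN opprB. Qed.
Lemma nrm_eq0 x : nrm x = 0 -> x = 0.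
Proof.
move=> h; apply: Nf_eq0; by rewrite -nrm_sq h expr0n.
Qed.
Lemma nrm0 : nrm 0 = 0.
Proof. by rewrite /nrm /Nf ip0r /= sqrtr0. Qed.
Lemma NfR (t : R) x : Nf (t%:C *: x) = t ^+ 2 * Nf x.
Proof. rewrite NfZ /=; congr (_ * _); lra. Qed.
Lemma nrmR (t : R) x : 0 <= t -> nrm (t%:C *: x) = t * nrm x.
Proof.
by move=> ht; rewrite /nrm NfR sqrtrM ?sqr_ge0 // sqrtr_sqr ger0_norm.
Qed.
Lemma nrm_unit (a : R[i]) x : complex.Re a ^+ 2 + complex.Im a ^+ 2 = 1 -> nrm (a *: x) = nrm x.
Proof. by move=> h; rewrite /nrm NfZ h mul1r. Qed.


Definition small (r : nat -> R) := forall e, 0 < e -> exists N, forall n, (N <= n)%N -> r n < e.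

Lemma small_le (p r : nat -> R) : small p -> (forall n, r n <= p n) -> small r.
Proof.
move=> hp h e he; have [N HN] := hp e he; exists N => n hn.
exact: le_lt_trans (h n) (HN n hn).
Qed.

Lemma small_add (p q : nat -> R) : small p -> small q -> small (fun n => p n + q n).
Proof.
move=> hp hq e he.
have he2 : 0 < e / 2 by rewrite divr_gt0.
have [N1 H1] := hp _ he2; have [N2 H2] := hq _ he2.
exists (maxn N1 N2) => n hn.
have := H1 n (leq_trans (leq_maxl _ _) hn); have := H2 n (leq_trans (leq_maxr _ _) hn).
lra.
Qed.

Lemma small_scale (K : R) (p : nat -> R) : 0 <= K -> small p -> small (fun n => K * p n).
Proof.
move=> hK hp e he.
have he2 : 0 < e / (K + 1) by rewrite divr_gt0 // ltr_wpDl.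
have [N H] := hp _ he2; exists N => n hn.
have := H n hn => h.
have : K * p n <= K * (e / (K + 1)).
  by apply: ler_wpM2l => //; apply: ltW.
have : K * (e / (K + 1)) < e.
  rewrite mulrA ltr_pdivrMr ?ltr_wpDl //.
  lra.
lra.
Qed.

Lemma small_comb (al be : R) (p q r : nat -> R) : 0 <= al -> 0 <= be ->
  small p -> small q -> (forall n, 0 <= p n) -> (forall n, 0 <= q n) -> (forall n, 0 <= r n) ->
  (forall n, r n ^+ 2 <= al * p n ^+ 2 + be * q n ^+ 2) -> small r.
Proof.
move=> ha hb hp hq p0 q0 r0 h e he.
have he2 : 0 < e / (al + be + 1) by rewrite divr_gt0 // ltr_wpDl // addr_ge0.
have [N1 H1] := hp _ he2; have [N2 H2] := hq _ he2.
exists (maxn N1 N2) => n hn.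
have h1 := H1 n (leq_trans (leq_maxl _ _) hn); have h2 := H2 n (leq_trans (leq_maxr _ _) hn).
set d := e / (al + be + 1) in he2 h1 h2.
have hd : d * (al + be + 1) = e by rewrite /d mulrVK // unitfE; apply/lt0r_neq0; rewrite ltr_wpDl // addr_ge0.
have := h n; have := p0 n; have := q0 n; have := r0 n.
move=> r0n q0n p0n hn2.
apply: sq_lt; first exact: ltW.
have hp2 : p n ^+ 2 <= d ^+ 2 by nra.
have hq2 : q n ^+ 2 <= d ^+ 2 by nra.
have ha2 : al * p n ^+ 2 <= al * d ^+ 2 by apply: ler_wpM2l.
have hb2 : be * q n ^+ 2 <= be * d ^+ 2 by apply: ler_wpM2l.
rewrite -hd.
have : 0 < d by [].
nra.
Qed.


Lemma small_zero (p : nat -> R) (r : R) : small p -> (forall n, `|r| <= p n) -> r = 0.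
Proof.
move=> hp h; apply/eqP; rewrite -normr_eq0; apply/negPn/negP => hr.
have hr' : 0 < `|r| by rewrite lt_def hr normr_ge0.
have [N HN] := hp _ hr'; have := HN N (leqnn N); have := h N; lra.
Qed.

Lemma complex0 (q : R[i]) : complex.Re q = 0 -> complex.Im q = 0 -> q = 0.
Proof. by case: q => a b /= -> ->. Qed.

Lemma cvg_unique (u : nat -> X) x y :
  small (fun n => nrm (u n - x)) -> small (fun n => nrm (u n - y)) -> x = y.
Proof.
move=> hx hy; apply/eqP; rewrite -subr_eq0; apply/eqP; apply: nrm_eq0.
apply: (small_zero (small_add hx hy)) => n.
rewrite ger0_norm ?nrm_ge0 //.
have -> : x - y = (x - u n) + (u n - y) by rewrite addrA subrK.
by apply: le_trans (nrm_triangle _ _) _; rewrite (nrmB x).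
Qed.

Lemma orth_dense (D : X -> Prop) v : dense_in ip D -> (forall w, D w -> ip w v = 0) -> v = 0.
Proof.
move=> hd h; apply: nrm_eq0; apply/eqP; apply/negPn/negP => hv.
have hv' : 0 < nrm v by rewrite lt_def hv nrm_ge0.
have he : 0 < nrm v / 2 by rewrite divr_gt0.
have [w [Dw hw]] := hd v _ he.
have e1 : Nf v = complex.Re (ip (v - w) v) by rewrite ipBl (h w Dw) subr0.
have := CSabs (v - w) v; have := ler_norm (complex.Re (ip (v - w) v)).
rewrite -e1 -nrm_sq => h1 h2.
have : nrm (v - w) * nrm v < nrm v / 2 * nrm v by rewrite ltr_pM2r.
nra.
Qed.

End IP.

Section Lin.
Variable R : realType.
Variables V W : lmodType R[i].
Variables (D : V -> Prop) (T : V -> W).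
Hypothesis HT : lin_on D T.

Lemma linD0 : D 0. Proof. by case: HT. Qed.
Lemma linDD x y : D x -> D y -> D (x + y).
Proof. by case: HT => _ h _ hx hy; have := h 1 x y hx hy; rewrite !scale1r. Qed.
Lemma linDZ a x : D x -> D (a *: x).
Proof. by case: HT => h0 h _ hx; rewrite -[_ *: x]addr0; apply: h. Qed.
Lemma linDN x : D x -> D (- x).
Proof. by move=> hx; rewrite -scaleN1r; apply: linDZ. Qed.
Lemma linDB x y : D x -> D y -> D (x - y).
Proof. by move=> hx hy; apply: linDD => //; apply: linDN. Qed.
Lemma linT0 : T 0 = 0.
Proof.
case: HT => h0 _ h; apply: (addrI (T 0)).
have := h 1 0 0 h0 h0; rewrite !scale1r addr0 => e.
by rewrite addr0 -e.
Qed.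
Lemma linTD x y : D x -> D y -> T (x + y) = T x + T y.
Proof. by case: HT => _ _ h hx hy; have := h 1 x y hx hy; rewrite !scale1r. Qed.
Lemma linTZ a x : D x -> T (a *: x) = a *: T x.
Proof.
case: HT => h0 _ h hx; by rewrite -[_ *: x]addr0 h // linT0 addr0.
Qed.
Lemma linTN x : D x -> T (- x) = - T x.
Proof. by move=> hx; rewrite -scaleN1r linTZ // scaleN1r. Qed.
Lemma linTB x y : D x -> D y -> T (x - y) = T x - T y.
Proof. by move=> hx hy; rewrite linTD ?linTN //; apply: linDN. Qed.
End Lin.

Section SA.
Variable R : realType.
Variable X : lmodType R[i].
Variable ip : X -> X -> R[i].
Hypothesis Hip : is_inner_product ip.
Variables (D : X -> Prop) (T : X -> X).
Hypothesis HT : self_adjoint ip D T.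

Lemma sa_closed (u : nat -> X) x z : (forall n, D (u n)) ->
  small (fun n => nrm ip (u n - x)) -> small (fun n => nrm ip (T (u n) - z)) ->
  D x /\ T x = z.
Proof.
case: HT => hlin hdense hsym hadj hu hx hz.
have key : forall w, D w -> ip (T w) x = ip w z.
  move=> w Dw; apply/eqP; rewrite -subr_eq0; apply/eqP.
  set q := _ - _.
  have eq : forall n, q = ip (T w) (x - u n) - ip w (z - T (u n)).
    move=> n; rewrite /q !(ipBr Hip) (hsym w (u n) Dw (hu n)); rewrite opprB addrA subrK; done.
  have hs : small (fun n => nrm ip (T w) * nrm ip (u n - x) + nrm ip w * nrm ip (T (u n) - z)).
    by apply: small_add; apply: small_scale => //; apply: nrm_ge0.
  apply: complex0.
    apply: (small_zero hs) => n; rewrite (eq n) ReD ReN.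
    apply: le_trans (ler_normB _ _) _.
    rewrite (nrmB Hip (u n) x) (nrmB Hip (T (u n)) z).
    by apply: lerD; apply: CSabs.
  apply: (small_zero hs) => n; rewrite (eq n) ImD ImN.
  apply: le_trans (ler_normB _ _) _.
  rewrite (nrmB Hip (u n) x) (nrmB Hip (T (u n)) z).
  by apply: lerD; apply: CSIm.
have Dx : D x by apply: hadj; exists z.
split => //.
apply/eqP; rewrite -subr_eq0; apply/eqP; apply: (orth_dense Hip hdense) => w Dw.
by rewrite ipBr // -hsym // key // subrr.
Qed.
End SA.



Lemma zz (V : zmodType) (u1 u2 u3 u4 u5 q : V) :
  u1 - (q - u4 - u5) = u1 + u2 + u3 - q - (u2 - u4) - (u3 - u5).
Proof.
rewrite !opprB -!addrA.
rewrite [u4 + (- u2 + _)]addrCA [- q + (- u2 + _)]addrCA [u3 + (- u2 + _)]addrCA addNKr.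
rewrite [u5 - u3]addrC [u4 + (- u3 + _)]addrCA [- q + (- u3 + _)]addrCA addNKr.
rewrite [u5 + (u4 - q)]addrCA addrC -addrA; congr (_ + _).
by rewrite addrC -addrA addrC -addrA.
Qed.

Section Opnorm.
Variable R : realType.
Variables V W : lmodType R[i].
Variables (ipV : V -> V -> R[i]) (ipW : W -> W -> R[i]) (D : V -> Prop) (T : V -> W).

Lemma opnorm_ub K : (forall x, D x -> ipnorm ipV x <= 1 -> ipnorm ipW (T x) <= K) ->
  forall x, D x -> ipnorm ipV x <= 1 -> ipnorm ipW (T x) <= opnorm ipV ipW D T.
Proof.
move=> hK x hx h1; apply: ub_le_sup; last by exists x.
by exists K => y [z [hz1 hz2] <-]; apply: hK.
Qed.

Lemma opnorm_ge0 K : (forall x, D x -> ipnorm ipV x <= 1 -> ipnorm ipW (T x) <= K) ->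
  forall x, D x -> ipnorm ipV x <= 1 -> 0 <= opnorm ipV ipW D T.
Proof.
move=> hK x hx h1; apply: le_trans (opnorm_ub hK hx h1); exact: sqrtr_ge0.
Qed.
End Opnorm.

Section Main.
Variable R : realType.
Variable X : lmodType R[i].
Variable ip : X -> X -> R[i].
Hypothesis Hip : is_inner_product ip.
Hypothesis Hcomplete : ip_complete ip.
Variables (DA : X -> Prop) (A : X -> X).
Hypothesis HA : self_adjoint ip DA A.
Variable eps : R.
Hypothesis Heps : 0 < eps.
Hypothesis HAeps : forall x, DA x -> Complex eps 0 * ip x x <= ip x (A x).
Variables (DS : X -> Prop) (S : X -> X).
Hypothesis HS : is_pos_sqrt ip DA A DS S.

Local Notation nrm := (nrm ip).
Local Notation Nf := (Nf ip).

Lemma Ssa : self_adjoint ip DS S. Proof. by case: HS. Qed.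
Lemma Slin : lin_on DS S. Proof. by case: Ssa. Qed.
Lemma Alin : lin_on DA A. Proof. by case: HA. Qed.
Lemma Ssym : symmetric_on ip DS S. Proof. by case: Ssa. Qed.
Lemma Asym : symmetric_on ip DA A. Proof. by case: HA. Qed.
Lemma DA_DS x : DA x -> DS x. Proof. by case: HS => _ _ h _ /h []. Qed.
Lemma DA_DSS x : DA x -> DS (S x). Proof. by case: HS => _ _ h _ /h []. Qed.
Lemma AS x : DA x -> A x = S (S x). Proof. by case: HS => _ _ _ h /h. Qed.

Lemma ipA x : DA x -> ip x (A x) = ip (S x) (S x).
Proof. by move=> hx; rewrite AS // -(Ssym (DA_DS hx) (DA_DSS hx)). Qed.

Lemma Aeps x : DA x -> eps * Nf x <= complex.Re (ip x (A x)).
Proof.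
move=> hx; have := HAeps hx; rewrite lecE => /andP [_].
by rewrite ReM /= mul0r subr0.
Qed.

Lemma Aeps2 x : DA x -> eps * Nf x <= Nf (S x).
Proof. by move=> hx; rewrite /Nf -ipA //; apply: Aeps. Qed.

Lemma A_lower w : DA w -> eps * nrm w <= nrm (A w).
Proof.
move=> hw; have h1 := Aeps hw; have h2 := CSabs Hip w (A w).
have h3 := ler_norm (complex.Re (ip w (A w))).
rewrite -(nrm_sq Hip) in h1.
have n0 := nrm_ge0 ip w; have m0 := nrm_ge0 ip (A w).
have [z|nz] := eqVneq (nrm w) 0; first by rewrite z mulr0.
have np : 0 < nrm w by rewrite lt_def nz n0.
have : nrm w * (eps * nrm w) <= nrm w * nrm (A w) by nra.
by rewrite ler_pM2l.
Qed.


Lemma hpos (n : nat) : 0 < (n.+1%:R : R)^-1.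
Proof. by rewrite invr_gt0 ltr0Sn. Qed.
Lemma hle1 (n : nat) : (n.+1%:R : R)^-1 <= 1.
Proof. by rewrite invr_le1 ?ler1n ?ltr0Sn ?unitfE ?pnatr_eq0. Qed.

Lemma hsmall : small (fun n => (n.+1%:R : R)^-1).
Proof.
move=> e he.
have h0 : 0 <= e^-1 by rewrite invr_ge0 ltW.
have hb := archi_boundP h0.
exists (Num.bound e^-1) => n hn.
rewrite -[e]invrK ltf_pV2 ?posrE ?ltr0Sn ?invr_gt0 //.
apply: lt_le_trans hb _; rewrite ler_nat; exact: leqW.
Qed.

Lemma small_le_lim (p : nat -> R) r s : small p -> (forall n, r <= s + p n) -> r <= s.
Proof.
move=> hp h; rewrite leNgt; apply/negP => hrs.
have hd : 0 < r - s by rewrite subr_gt0.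
have [N HN] := hp _ hd; have := HN N (leqnn N); have := h N; lra.
Qed.

Lemma parallelogram p q : Nf (p - q) + Nf (p + q) = 2 * Nf p + 2 * Nf q.
Proof.
rewrite !(NfD Hip) (NfN Hip) (ipNr Hip) ReN; lra.
Qed.

Lemma two_mid (x u v : X) : (x - u) + (x - v) = 2 *: (x - 2^-1 *: (u + v)).
Proof.
rewrite scalerBr scalerA mulfV ?pnatr_eq0 // scale1r scaler_nat mulr2n.
by rewrite opprD addrACA.
Qed.

Lemma Nf2 v : Nf (2 *: v) = 4 * Nf v.
Proof. rewrite (NfZ Hip); congr (_ * _) => /=; lra. Qed.

Lemma A_surj x : exists w, DA w /\ A w = x.
Proof.
pose E := fun r : R => exists w, DA w /\ nrm (x - A w) = r.
have DA0 : DA 0 := linD0 Alin.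
have E0 : E (nrm (x - A 0)) by exists 0.
have hlb : lbound E 0 by move=> r [w [_ <-]]; apply: nrm_ge0.
have hinf : has_inf E by split; [exists (nrm (x - A 0)) | exists 0].
set dl := inf E.
have dlb : forall v, DA v -> dl <= nrm (x - A v).
  by move=> v hv; apply: (ge_inf hinf.2); exists v.
have d0 : 0 <= dl by apply: lb_le_inf => //; exists (nrm (x - A 0)).
have sq : forall n : nat, exists w, DA w /\ nrm (x - A w) < dl + (n.+1%:R)^-1.
  by move=> n; have [r [w [hw <-]] hr] := inf_adherent (hpos n) hinf; exists w.
have [ws hws] := choice sq.
pose h n := (n.+1%:R : R)^-1.
pose K := 2 * (2 * dl + 1).
have bound : forall n m, Nf (A (ws n) - A (ws m)) <= K * (h n + h m).
  move=> n m.
  have [hn1 hn2] := hws n; have [hm1 hm2] := hws m.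
  pose mid := 2^-1 *: (ws m + ws n).
  have Dmid : DA mid by rewrite /mid; apply: (linDZ Alin); apply: (linDD Alin).
  have Amid : A mid = 2^-1 *: (A (ws m) + A (ws n)) by rewrite /mid (linTZ Alin) ?(linTD Alin) //; apply: (linDD Alin).
  have e1 := parallelogram (x - A (ws m)) (x - A (ws n)).
  rewrite two_mid -Amid Nf2 in e1.
  have -> : A (ws n) - A (ws m) = (x - A (ws m)) - (x - A (ws n)) by apply/esym; rewrite opprB addrC addrA subrK.
  have l1 := dlb _ Dmid.
  have l2 := dlb _ hn1; have l3 := dlb _ hm1.
  rewrite -!(nrm_sq Hip) in e1 *.
  have h1 := hpos n; have h2 := hpos m; have h3 := hle1 n; have h4 := hle1 m.
  rewrite /K /h.
  set a1 := nrm (x - A (ws n)) in hn2 l2 e1 *.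
  set a2 := nrm (x - A (ws m)) in hm2 l3 e1 *.
  set a3 := nrm (x - A mid) in l1 e1.
  set t1 := (n.+1%:R)^-1 in hn2 h1 h3 *.
  set t2 := (m.+1%:R)^-1 in hm2 h2 h4 *.
  have q1 : a1 ^+ 2 <= dl ^+ 2 + (2 * dl + 1) * t1 by nra.
  have q2 : a2 ^+ 2 <= dl ^+ 2 + (2 * dl + 1) * t2 by nra.
  have q3 : dl ^+ 2 <= a3 ^+ 2 by nra.
  lra.
have K0 : 0 < K by rewrite /K; lra.
have cauchyA : ip_cauchy ip (fun n => A (ws n)).
  move=> e he.
  have hc : 0 < e ^+ 2 / (2 * K) by rewrite divr_gt0 ?exprn_gt0 // mulr_gt0.
  have [N HN] := hsmall hc.
  exists N => n m hn hm.
  rewrite nrm_ipnorm; apply: sq_lt; first exact: ltW.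
  rewrite (nrm_sq Hip).
  apply: le_lt_trans (bound n m) _.
  have := HN n hn; have := HN m hm; rewrite /h.
  set t1 := (n.+1%:R)^-1; set t2 := (m.+1%:R)^-1 => a1 a2.
  have : K * (t1 + t2) < K * (2 * (e ^+ 2 / (2 * K))) by rewrite ltr_pM2l //; lra.
  have -> : K * (2 * (e ^+ 2 / (2 * K))) = e ^+ 2.
    by field; rewrite lt0r_neq0.
  done.
have cauchyW : ip_cauchy ip ws.
  move=> e he.
  have [N HN] := cauchyA _ (mulr_gt0 he Heps).
  exists N => n m hn hm.
  have := HN n m hn hm; rewrite !nrm_ipnorm => h1.
  have hn' := (hws n).1; have hm' := (hws m).1.
  have hd : DA (ws n - ws m) by apply: (linDB Alin).
  have := A_lower hd; rewrite (linTB Alin) // => h2.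
  have : eps * nrm (ws n - ws m) < eps * e by apply: le_lt_trans h2 _; rewrite mulrC.
  by rewrite ltr_pM2l.
have [z hz] := Hcomplete cauchyA.
have [w hw] := Hcomplete cauchyW.
have [Dw Awz] := sa_closed Hip HA (fun n => (hws n).1) hw hz.
have hy : nrm (x - A w) <= dl.
  apply: (small_le_lim (small_add hsmall hz)) => n.
  have -> : x - A w = (x - A (ws n)) + (A (ws n) - A w) by rewrite addrA subrK.
  apply: le_trans (nrm_triangle Hip _ _) _.
  rewrite Awz addrA lerD2r; apply: ltW; exact: (hws n).2.
set y := x - A w.
have hmin : forall v, DA v -> nrm y <= nrm (x - A v).
  by move=> v hv; apply: le_trans hy (dlb v hv).
have orthRe : forall v, DA v -> complex.Re (ip y (A v)) = 0.
  move=> v hv.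
  have key : forall t : R, 0 <= t ^+ 2 * Nf (A v) + 2 * t * (- complex.Re (ip y (A v))) + 0.
    move=> t.
    have hv' : DA (t%:C *: v) by apply: (linDZ Alin).
    have := hmin (w + t%:C *: v) (linDD Alin Dw hv').
    rewrite (linTD Alin) // (linTZ Alin) // opprD addrA -/y => h1.
    have h2 : Nf y <= Nf (y - t%:C *: A v).
      by rewrite -!(nrm_sq Hip) ler_pXn2r // ?nnegrE ?nrm_ge0.
    move: h2; rewrite (NfD Hip) (NfN Hip) (NfR Hip) (ipNr Hip) (ipZr Hip) ReN ReM /=.
    rewrite mul0r subr0; lra.
  have := disc (Nf_ge0 Hip _) key; rewrite mulr0.
  move=> hh; apply/eqP; rewrite -oppr_eq0 -sqrf_eq0 eq_le hh sqr_ge0 //.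
have orth : forall v, DA v -> ip (A v) y = 0.
  move=> v hv.
  have hv' : DA ('i *: v) by apply: (linDZ Alin).
  have h1 := orthRe _ hv'; rewrite (linTZ Alin) // (ipZr Hip) ReM /= mul0r sub0r mul1r in h1.
  have h2 : ip y (A v) = 0 by apply: complex0; [exact: orthRe | lra].
  by rewrite (ipC Hip) h2 conj0.
have Dy : DA y.
  case: HA => _ _ _ hadj; apply: hadj; exists 0 => v hv; by rewrite orth // (ip0r Hip).
have Ny : Nf y = 0.
  have := Aeps Dy; rewrite (ipC Hip) orth // conj0 /=.
  have := Nf_ge0 Hip y => h1 h2; apply: le_anti; rewrite h1 andbT -(pmulr_rle0 _ Heps); exact: h2.
exists w; split => //.
have := Nf_eq0 Hip Ny; rewrite /y => /eqP; rewrite subr_eq0 => /eqP.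
by [].
Qed.


Lemma S_lower x : DS x -> eps * Nf x <= Nf (S x).
Proof.
move=> hx; have [w [hw Awx]] := A_surj x.
have hs : DS (S w) := DA_DSS hw.
have Ssx : S (S w) = x by rewrite -AS.
have e1 : Nf x = complex.Re (ip (S x) (S w)) by rewrite (Ssym hx hs) Ssx.
have c1 := CS Hip (S x) (S w); rewrite -e1 in c1.
have e2 : Nf (S w) = complex.Re (ip w x) by rewrite /Nf -ipA // Awx.
have c2 := CS Hip w x; rewrite -e2 in c2.
have a1 := Aeps hw; rewrite Awx -e2 in a1.
have p1 := Nf_ge0 Hip x; have p2 := Nf_ge0 Hip (S w); have p3 := Nf_ge0 Hip w.
have p4 := Nf_ge0 Hip (S x).
have b1 : eps * Nf (S w) <= Nf x.
  have [z|nz] := eqVneq (Nf (S w)) 0; first by rewrite z mulr0.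
  have pos : 0 < Nf (S w) by rewrite lt_def nz p2.
  have m1 : eps * Nf w * Nf x <= Nf (S w) * Nf x by apply: ler_wpM2r.
  have m2 : eps * Nf (S w) ^+ 2 <= eps * (Nf w * Nf x) by apply: ler_wpM2l => //; apply: ltW.
  have : Nf (S w) * (eps * Nf (S w)) <= Nf (S w) * Nf x by nra.
  by rewrite ler_pM2l.
have [z|nz] := eqVneq (Nf x) 0; first by rewrite z mulr0.
have pos : 0 < Nf x by rewrite lt_def nz p1.
have m1 : eps * Nf x ^+ 2 <= eps * (Nf (S x) * Nf (S w)) by apply: ler_wpM2l => //; apply: ltW.
have m2 : eps * Nf (S w) * Nf (S x) <= Nf x * Nf (S x) by apply: ler_wpM2r.
have : Nf x * (eps * Nf x) <= Nf x * Nf (S x) by nra.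
by rewrite ler_pM2l.
Qed.


Variables (B : X -> X) (Cop : X -> X).

Lemma pair_eta (z : X * X) : z = (z.1, z.2). Proof. by case: z. Qed.

Lemma fstD (u v : X * X) : (u + v).1 = u.1 + v.1. Proof. by []. Qed.
Lemma sndD (u v : X * X) : (u + v).2 = u.2 + v.2. Proof. by []. Qed.
Lemma fstN (u : X * X) : (- u).1 = - u.1. Proof. by []. Qed.
Lemma sndN (u : X * X) : (- u).2 = - u.2. Proof. by []. Qed.
Lemma fstZ a (u : X * X) : (a *: u).1 = a *: u.1. Proof. by []. Qed.
Lemma sndZ a (u : X * X) : (a *: u).2 = a *: u.2. Proof. by []. Qed.
Lemma fst0 : (0 : X * X).1 = 0. Proof. by []. Qed.
Lemma snd0 : (0 : X * X).2 = 0. Proof. by []. Qed.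

Lemma Gplus_eq xi : Gplus A B Cop xi = (- xi.2, A xi.1 + 'i *: B xi.2 + Cop xi.1).
Proof.
rewrite /Gplus /Hop /Bhat /Vop /iC.
have e1 : (- Complex 0 1) * (Complex 0 1) = 1 :> R[i] by rewrite /= ; congr Complex; lra.
rewrite [LHS]pair_eta fstZ sndZ !fstD !sndD /=.
congr pair.
  by rewrite !addr0 scalerN scalerA e1 scale1r.
by rewrite !scalerDr !scalerA e1 !scale1r scalerN scaleNr opprK.
Qed.

Lemma Gminus_eq xi : Gminus A B Cop xi = (xi.2, - (A xi.1 + 'i *: B xi.2 + Cop xi.1)).
Proof.
have -> : Gminus A B Cop xi = - Gplus A B Cop xi.
  by rewrite /Gminus /Gplus scaleNr opprK.
by rewrite Gplus_eq [LHS]pair_eta fstN sndN /= opprK.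
Qed.


Hypothesis HBlin : lin_on DS B.
Variables (a b : R).
Hypothesis HBbound : forall x, DS x ->
     ipnorm ip (B x) ^+ 2 <= a ^+ 2 * ipnorm ip (S x) ^+ 2 + b ^+ 2 * ipnorm ip x ^+ 2.
Hypothesis HClin : lin_on DS Cop.
Variables (c d : R).
Hypothesis HCbound : forall x, DS x ->
     ipnorm ip (Cop x) ^+ 2 <= c ^+ 2 * ipnorm ip (S x) ^+ 2 + d ^+ 2 * ipnorm ip x ^+ 2.

Lemma small_S (xs : nat -> X) x : (forall n, DS (xs n)) -> DS x ->
  small (fun n => nrm (S (xs n - x))) -> small (fun n => nrm (xs n - x)).
Proof.
move=> hxs hx hs.
apply: (@small_comb _ eps^-1 0 _ (fun _ => 0) _ _ _ hs) => //.
- by rewrite invr_ge0 ltW.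
- by move=> e he; exists 0%N.
- by move=> n; apply: nrm_ge0.
- by move=> n; apply: nrm_ge0.
- move=> n; rewrite expr0n /= mulr0 addr0 !(nrm_sq Hip).
  have hd : DS (xs n - x) by apply: (linDB Slin).
  have := S_lower hd.
  by rewrite mulrC -ler_pdivlMr // mulrC.
Qed.

Lemma small_rel (T : X -> X) (al be : R) (xs : nat -> X) x :
  lin_on DS T ->
  (forall v, DS v -> nrm (T v) ^+ 2 <= al ^+ 2 * nrm (S v) ^+ 2 + be ^+ 2 * nrm v ^+ 2) ->
  (forall n, DS (xs n)) -> DS x ->
  small (fun n => nrm (S (xs n - x))) -> small (fun n => nrm (xs n - x)) ->
  small (fun n => nrm (T (xs n) - T x)).
Proof.
move=> hT hb hxs hx h1 h2.
apply: (@small_comb _ (al ^+ 2) (be ^+ 2) _ _ _ _ _ h1 h2); rewrite ?sqr_ge0 //; try (by move=> n; apply: nrm_ge0).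
move=> n; rewrite -(linTB hT) //; apply: hb; exact: (linDB Slin).
Qed.

Lemma core (xs ys : nat -> X) x1 x2 p q :
  (forall n, DA (xs n)) -> (forall n, DS (ys n)) -> DS x1 -> DS p ->
  small (fun n => nrm (S (xs n - x1))) ->
  small (fun n => nrm (ys n - x2)) ->
  small (fun n => nrm (S (- ys n - p))) ->
  small (fun n => nrm (A (xs n) + 'i *: B (ys n) + Cop (xs n) - q)) ->
  [/\ DA x1, DS x2, - x2 = p & A x1 + 'i *: B x2 + Cop x1 = q].
Proof.
move=> hxs hys hx1 hp h1 h2 h3 h4.
have hxs' : forall n, DS (xs n) by move=> n; apply: DA_DS.
have hys' : forall n, DS (- ys n) by move=> n; apply: (linDN Slin).
have c1 := small_S hxs' hx1 h1.
have c3 := small_S hys' hp h3.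
have c3' : small (fun n => nrm (- ys n - - x2)).
  by apply: (small_le h2) => n; rewrite -opprD (nrmN Hip).
have ep : p = - x2 := cvg_unique Hip c3 c3'.
have hx2 : DS x2 by rewrite -[x2]opprK -ep; apply: (linDN Slin).
have h2S : small (fun n => nrm (S (ys n - x2))).
  apply: (small_le h3) => n; rewrite ep -opprD (linTN Slin) ?(nrmN Hip) //.
  by apply: (linDB Slin).
have hB : forall v, DS v -> nrm (B v) ^+ 2 <= a ^+ 2 * nrm (S v) ^+ 2 + b ^+ 2 * nrm v ^+ 2.
  exact: HBbound.
have hC : forall v, DS v -> nrm (Cop v) ^+ 2 <= c ^+ 2 * nrm (S v) ^+ 2 + d ^+ 2 * nrm v ^+ 2.
  exact: HCbound.
have cB := small_rel HBlin hB hys hx2 h2S h2.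
have cC := small_rel HClin hC hxs' hx1 h1 c1.
pose z := q - 'i *: B x2 - Cop x1.
have cA : small (fun n => nrm (A (xs n) - z)).
  apply: (small_le (small_add (small_add h4 cB) cC)) => n.
  have -> : A (xs n) - z = (A (xs n) + 'i *: B (ys n) + Cop (xs n) - q)
      - 'i *: (B (ys n) - B x2) - (Cop (xs n) - Cop x1).
    by rewrite /z scalerBr (zz _ ('i *: B (ys n)) (Cop (xs n))).
  apply: le_trans (nrm_triangle Hip _ _) _; rewrite (nrmN Hip) lerD2r.
  apply: le_trans (nrm_triangle Hip _ _) _; rewrite (nrmN Hip) nrm_i //.
have [DA1 Ax1] := sa_closed Hip HA hxs c1 cA.
split; [done | done | by rewrite ep | ].
by rewrite Ax1 /z addrAC !subrK.
Qed.


Local Notation Yp := (Yip ip S).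

Lemma ReY z : complex.Re (Yp z z) = Nf (S z.1) + Nf z.2.
Proof. by rewrite /Yip ReD. Qed.

Lemma nrmY_fst z : nrm (S z.1) <= ipnorm Yp z.
Proof.
rewrite /ipnorm ReY /nrm ler_sqrt ?lerDl ?Nf_ge0 //.
by rewrite addr_ge0 ?Nf_ge0.
Qed.
Lemma nrmY_snd z : nrm z.2 <= ipnorm Yp z.
Proof.
rewrite /ipnorm ReY /nrm ler_sqrt ?lerDr ?Nf_ge0 //.
by rewrite addr_ge0 ?Nf_ge0.
Qed.

Lemma fstG (G : X * X -> X * X) (z e : X * X) : (G z - e).1 = (G z).1 - e.1. Proof. by []. Qed.
Lemma sndG (G : X * X -> X * X) (z e : X * X) : (G z - e).2 = (G z).2 - e.2. Proof. by []. Qed.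

Lemma closed_plus : closed_op Yp (inY DS) (DH DA DS) (Gplus A B Cop).
Proof.
move=> u xi eta hu hxi heta cu cG.
have hxs : forall n, DA (u n).1 by move=> n; case: (hu n).
have hys : forall n, DS (u n).2 by move=> n; case: (hu n).
have [] := @core (fun n => (u n).1) (fun n => (u n).2) xi.1 xi.2 eta.1 eta.2 hxs hys hxi heta.
- apply: (small_le cu) => n; have h := nrmY_fst (u n - xi); exact: h.
- apply: (small_le cu) => n; have h := nrmY_snd (u n - xi); exact: h.
- apply: (small_le cG) => n; have h := nrmY_fst (Gplus A B Cop (u n) - eta); rewrite fstG {1}Gplus_eq /= in h; exact: h.
- apply: (small_le cG) => n; have h := nrmY_snd (Gplus A B Cop (u n) - eta); rewrite sndG {1}Gplus_eq /= in h; exact: h.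
move=> h1 h2 h3 h4; split; first by [].
by rewrite Gplus_eq [RHS]pair_eta h3 h4.
Qed.

Lemma closed_minus : closed_op Yp (inY DS) (DH DA DS) (Gminus A B Cop).
Proof.
move=> u xi eta hu hxi heta cu cG.
have hxs : forall n, DA (u n).1 by move=> n; case: (hu n).
have hys : forall n, DS (u n).2 by move=> n; case: (hu n).
have hp : DS (- eta.1) by apply: (linDN Slin).
have [] := @core (fun n => (u n).1) (fun n => (u n).2) xi.1 xi.2 (- eta.1) (- eta.2) hxs hys hxi hp.
- apply: (small_le cu) => n; have h := nrmY_fst (u n - xi); exact: h.
- apply: (small_le cu) => n; have h := nrmY_snd (u n - xi); exact: h.
- apply: (small_le cG) => n.
  rewrite -opprD (linTN Slin) ?(nrmN Hip); last by apply: (linDB Slin).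
  have h := nrmY_fst (Gminus A B Cop (u n) - eta); rewrite fstG {1}Gminus_eq /= in h; exact: h.
- apply: (small_le cG) => n.
  rewrite -(nrmN Hip) opprD opprK.
  have h := nrmY_snd (Gminus A B Cop (u n) - eta); rewrite sndG {1}Gminus_eq /= in h; exact: h.
move=> h1 h2 h3 h4; split; first by [].
rewrite Gminus_eq [RHS]pair_eta h4 opprK; congr pair.
by apply: oppr_inj.
Qed.


Definition normV := opnorm Yp Yp (inY DS) (Vop Cop).

Lemma nrmY_V xi : ipnorm Yp (Vop Cop xi) = nrm (Cop xi.1).
Proof.
rewrite /ipnorm /Yip /Vop /= (linT0 Slin) (ip0r Hip) add0r.
exact: (nrm_i Hip).
Qed.

Lemma sqrt_le1 (v : R) : Num.sqrt v <= 1 -> v <= 1.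
Proof.
move=> h; have [v0|v0] := lerP v 0; first by apply: le_trans v0 ler01.
by move: h; rewrite -{1}sqrtr1 ler_sqrt ?ler01.
Qed.

Lemma V_K xi : inY DS xi -> ipnorm Yp xi <= 1 -> ipnorm Yp (Vop Cop xi) <= c ^+ 2 + d ^+ 2 / eps + 1.
Proof.
move=> hx h1; rewrite nrmY_V.
have h2 : Nf (S xi.1) + Nf xi.2 <= 1 by rewrite -ReY; apply: sqrt_le1.
have h3 := S_lower hx.
have n1 := Nf_ge0 Hip (S xi.1); have n2 := Nf_ge0 Hip xi.2; have n3 := Nf_ge0 Hip xi.1.
have h4 : Nf xi.1 <= eps^-1.
  rewrite -(ler_pM2l Heps) mulfV ?lt0r_neq0 //; lra.
have h5 := HCbound hx; rewrite !nrm_ipnorm !(nrm_sq Hip) in h5.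
have c0 := sqr_ge0 c; have d0 := sqr_ge0 d.
have h6 : Nf (Cop xi.1) <= c ^+ 2 + d ^+ 2 / eps.
  have : c ^+ 2 * Nf (S xi.1) <= c ^+ 2 by rewrite ler_piMr //; lra.
  have : d ^+ 2 * Nf xi.1 <= d ^+ 2 / eps by apply: ler_wpM2l.
  lra.
have k0 : 0 <= d ^+ 2 / eps by rewrite divr_ge0 // ltW.
rewrite -(nrm_sq Hip) in h6.
have := nrm_ge0 ip (Cop xi.1); nra.
Qed.

Lemma normV_ge0 : 0 <= normV.
Proof.
apply: (opnorm_ge0 V_K (x := 0)); first by rewrite /inY /=; apply: (linD0 Slin).
rewrite /ipnorm /Yip /= (linT0 Slin) (ip0r Hip) add0r /= sqrtr0; exact: ler01.
Qed.

Lemma C_bound x : DS x -> nrm (Cop x) <= normV * nrm (S x).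
Proof.
move=> hx.
have [z|nz] := eqVneq (nrm (S x)) 0.
  have : Nf (S x) = 0 by rewrite -(nrm_sq Hip) z expr0n.
  move=> h0; have := S_lower hx; rewrite h0 => h1.
  have : Nf x = 0.
    apply: le_anti; rewrite (Nf_ge0 Hip x) andbT -(pmulr_rle0 _ Heps); exact: h1.
  move/(Nf_eq0 Hip) => x0; move: z; rewrite x0 (linT0 HClin) (nrm0 Hip) => ->; by rewrite mulr0.
have rp : 0 < nrm (S x) by rewrite lt_def nz nrm_ge0.
set r := nrm (S x) in rp nz *.
pose xi : X * X := ((r^-1)%:C *: x, 0).
have hxi : inY DS xi by rewrite /inY /=; apply: (linDZ Slin).
have hn : ipnorm Yp xi <= 1.
  rewrite /ipnorm /Yip /= (ip0r Hip) addr0 (linTZ Slin) //.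
  rewrite -/(Nf _) (NfR Hip) -(nrm_sq Hip) -/r exprVn mulVf ?sqrtr1 //.
  by rewrite expf_neq0.
have := opnorm_ub V_K hxi hn; rewrite -/normV nrmY_V /= (linTZ HClin) // (nrmR Hip).
  move=> h; have := ler_wpM2r (ltW rp) h; by rewrite mulrAC mulVf ?mul1r.
by rewrite invr_ge0 ltW.
Qed.


Definition opB := opnorm ip ip DS B.


Section Bd.
Variable M : R.
Hypothesis HM : forall x, DS x -> nrm (B x) <= M * nrm x.

Lemma B_K x : DS x -> ipnorm ip x <= 1 -> ipnorm ip (B x) <= `|M|.
Proof.
move=> hx h1; rewrite !nrm_ipnorm in h1 *.
apply: le_trans (HM hx) _.
apply: le_trans (ler_norm _) _; rewrite normrM (ger0_norm (nrm_ge0 _ _)).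
by rewrite ler_piMr.
Qed.

Lemma opB_ge0 : 0 <= opB.
Proof.
apply: (opnorm_ge0 B_K (x := 0)); first exact: (linD0 Slin).
by rewrite nrm_ipnorm (nrm0 Hip) ler01.
Qed.

Lemma B_bound y : DS y -> nrm (B y) <= opB * nrm y.
Proof.
move=> hy.
have [z|nz] := eqVneq (nrm y) 0.
  by rewrite (nrm_eq0 Hip z) (linT0 HBlin) (nrm0 Hip) mulr0.
have rp : 0 < nrm y by rewrite lt_def nz nrm_ge0.
set r := nrm y in rp nz *.
have hx : DS ((r^-1)%:C *: y) by apply: (linDZ Slin).
have hn : ipnorm ip ((r^-1)%:C *: y) <= 1.
  by rewrite nrm_ipnorm (nrmR Hip) -/r ?mulVf // invr_ge0 ltW.
have := opnorm_ub B_K hx hn; rewrite -/opB nrm_ipnorm (linTZ HBlin) // (nrmR Hip); last by rewrite invr_ge0 ltW.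
move=> h; have := ler_wpM2r (ltW rp) h; by rewrite mulrAC mulVf ?mul1r.
Qed.
End Bd.

Lemma Re_plus xi : DH DA DS xi -> complex.Re (Yp xi (Gplus A B Cop xi)) =
  - complex.Im (ip xi.2 (B xi.2)) + complex.Re (ip xi.2 (Cop xi.1)).
Proof.
case=> hx hy; rewrite /Yip Gplus_eq /= (linTN Slin) // (ipNr Hip) !(ipDr Hip) (ipZr Hip).
rewrite AS // -(Ssym hy (DA_DSS hx)) !ReD ReN ReM /= (ReipC Hip (S xi.1)).
lra.
Qed.

Lemma Re_minus xi : DH DA DS xi -> complex.Re (Yp xi (Gminus A B Cop xi)) =
  - (- complex.Im (ip xi.2 (B xi.2)) + complex.Re (ip xi.2 (Cop xi.1))).
Proof.
case=> hx hy; rewrite /Yip Gminus_eq /= (ipNr Hip) !(ipDr Hip) (ipZr Hip).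
rewrite AS // -(Ssym hy (DA_DSS hx)) ReD ReN !ReD ReM /= (ReipC Hip (S xi.1)).
lra.
Qed.

Lemma ab_le (u v : R) : 0 <= u -> 0 <= v -> u * v <= u ^+ 2 + v ^+ 2.
Proof. move=> hu hv; nra. Qed.

Lemma estC xi : DH DA DS xi -> `|complex.Re (ip xi.2 (Cop xi.1))| <= normV * complex.Re (Yp xi xi).
Proof.
case=> hx hy; rewrite ReY.
apply: le_trans (CSabs Hip _ _) _.
have h1 := C_bound (DA_DS hx).
have h2 : nrm xi.2 * nrm (Cop xi.1) <= nrm xi.2 * (normV * nrm (S xi.1)).
  by apply: ler_wpM2l => //; apply: nrm_ge0.
apply: le_trans h2 _.
rewrite mulrCA; apply: ler_wpM2l; first exact: normV_ge0.
rewrite -!(nrm_sq Hip) mulrC; apply: ab_le; exact: nrm_ge0.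
Qed.

Lemma estB xi : bounded_on ip ip DS B -> DH DA DS xi ->
  `|complex.Im (ip xi.2 (B xi.2))| <= opB * complex.Re (Yp xi xi).
Proof.
move=> [M hM] [hx hy]; rewrite ReY.
apply: le_trans (CSIm Hip _ _) _.
have h1 := B_bound hM hy.
have h2 : nrm xi.2 * nrm (B xi.2) <= nrm xi.2 * (opB * nrm xi.2).
  by apply: ler_wpM2l => //; apply: nrm_ge0.
apply: le_trans h2 _.
rewrite mulrCA; apply: ler_wpM2l; first exact: (opB_ge0 hM).
rewrite -expr2 (nrm_sq Hip) lerDr; exact: Nf_ge0.
Qed.

Lemma estBsym xi : symmetric_on ip DS B -> DH DA DS xi -> complex.Im (ip xi.2 (B xi.2)) = 0.
Proof.
move=> hs [hx hy].
have e : ip xi.2 (B xi.2) = conjc (ip xi.2 (B xi.2)) by rewrite -(ipC Hip) hs.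
have := congr1 (@complex.Im R) e; rewrite ImC => h; lra.
Qed.


Lemma main (HBsb : symmetric_on ip DS B \/ bounded_on ip ip DS B) :
  let Yp := Yip ip S in
  let normV := opnorm Yp Yp (inY DS) (Vop Cop) in
  [/\ closed_op Yp (inY DS) (DH DA DS) (Gplus A B Cop),
      closed_op Yp (inY DS) (DH DA DS) (Gminus A B Cop),
      quasi_accretive Yp (DH DA DS) (Gplus A B Cop),
      quasi_accretive Yp (DH DA DS) (Gminus A B Cop)
    & forall G : X * X -> X * X,
        G = Gplus A B Cop \/ G = Gminus A B Cop ->
        forall xi, DH DA DS xi ->
          (symmetric_on ip DS B ->
             complex.Re (Yp xi (G xi)) >= - normV * complex.Re (Yp xi xi))
          /\ (bounded_on ip ip DS B ->
             complex.Re (Yp xi (G xi))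
               >= - (opnorm ip ip DS B + normV) * complex.Re (Yp xi xi))].
Proof.
cbv zeta; rewrite -/normV -/opB.
have part5 : forall G : X * X -> X * X,
        G = Gplus A B Cop \/ G = Gminus A B Cop ->
        forall xi, DH DA DS xi ->
          (symmetric_on ip DS B ->
             complex.Re (Yp xi (G xi)) >= - normV * complex.Re (Yp xi xi))
          /\ (bounded_on ip ip DS B ->
             complex.Re (Yp xi (G xi))
               >= - (opB + normV) * complex.Re (Yp xi xi)).
  move=> G hG xi hxi.
  have c1 := estC hxi.
  have n1 := ler_norm (complex.Re (ip xi.2 (Cop xi.1))).
  have n2 := ler_norm (- complex.Re (ip xi.2 (Cop xi.1))); rewrite normrN in n2.
  split => [hs | hb].
    have e := estBsym hs hxi.
    by case: hG => ->; [rewrite Re_plus // | rewrite Re_minus //]; rewrite e; lra.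
  have c2 := estB hb hxi.
  have m1 := ler_norm (complex.Im (ip xi.2 (B xi.2))).
  have m2 := ler_norm (- complex.Im (ip xi.2 (B xi.2))); rewrite normrN in m2.
  by case: hG => ->; [rewrite Re_plus // | rewrite Re_minus //]; lra.
split.
- exact: closed_plus.
- exact: closed_minus.
- case: HBsb => [hs | hb].
    by exists normV => xi hxi; exact: ((part5 _ (or_introl erefl) xi hxi).1 hs).
  by exists (opB + normV) => xi hxi; exact: ((part5 _ (or_introl erefl) xi hxi).2 hb).
- case: HBsb => [hs | hb].
    by exists normV => xi hxi; exact: ((part5 _ (or_intror erefl) xi hxi).1 hs).
  by exists (opB + normV) => xi hxi; exact: ((part5 _ (or_intror erefl) xi hxi).2 hb).
- exact: part5.
Qed.

End Main.

Theorem lemma6 (R : realType) (X : lmodType R[i]) (ip : X -> X -> R[i])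
  (Hip : is_inner_product ip) (Hcomplete : ip_complete ip)
  (Hnontriv : exists x : X, x != 0)
  (DA : X -> Prop) (A : X -> X) (HA : self_adjoint ip DA A)
  (eps : R) (Heps : 0 < eps)
  (HAeps : forall x, DA x -> Complex eps 0 * ip x x <= ip x (A x))
  (DS : X -> Prop) (S : X -> X) (HS : is_pos_sqrt ip DA A DS S)
  (B : X -> X) (HBlin : lin_on DS B) (a b : R) (Ha : 0 <= a < 1)
  (HBbound : forall x, DS x ->
     ipnorm ip (B x) ^+ 2 <= a ^+ 2 * ipnorm ip (S x) ^+ 2 + b ^+ 2 * ipnorm ip x ^+ 2)
  (HBsb : symmetric_on ip DS B \/ bounded_on ip ip DS B)
  (Cop : X -> X) (HClin : lin_on DS Cop) (c d : R)
  (HCbound : forall x, DS x ->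
     ipnorm ip (Cop x) ^+ 2 <= c ^+ 2 * ipnorm ip (S x) ^+ 2 + d ^+ 2 * ipnorm ip x ^+ 2) :
  let Yp := Yip ip S in
  let normV := opnorm Yp Yp (inY DS) (Vop Cop) in
  [/\ closed_op Yp (inY DS) (DH DA DS) (Gplus A B Cop),
      closed_op Yp (inY DS) (DH DA DS) (Gminus A B Cop),
      quasi_accretive Yp (DH DA DS) (Gplus A B Cop),
      quasi_accretive Yp (DH DA DS) (Gminus A B Cop)
    & forall G : X * X -> X * X,
        G = Gplus A B Cop \/ G = Gminus A B Cop ->
        forall xi, DH DA DS xi ->
          (symmetric_on ip DS B ->
             complex.Re (Yp xi (G xi)) >= - normV * complex.Re (Yp xi xi))
          /\ (bounded_on ip ip DS B ->
             complex.Re (Yp xi (G xi))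
               >= - (opnorm ip ip DS B + normV) * complex.Re (Yp xi xi))].
Proof.
move=> Yp normV.
have [h1 h2 h3 h4 h5] := main Hip Hcomplete HA Heps HAeps HS HBlin HBbound HClin HCbound HBsb.
by split.
Qed.
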